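(* Let $B$ be a cubic 3-connected graph with no 3-blockades, and let $G$ be the graph obtained from $B$ by replacing each vertex $u$ by a triangle $T_u$ (as described in the context). (a1) Let $P$ be any $\Lambda$-factor of $G$. Then (a1.1) $\vec F(P,G)$ is a cycle-dipacking in $B$; (a1.2) $|K\cap E(P)|\in\{0,2\}$ for every 3-blockade $K$ of $G$; (a1.3) $E(T)\cap E(P)\neq\emptyset$ for every triangle $T$ of $G$. (a2) For every cycle-dipacking $\vec Q$ in $B$, $G$ has a $\Lambda$-factor $P$ with $\vec F(P,G)=\vec Q$.
   Context: Graphs are finite and simple. A $\Lambda$-factor of a graph is a spanning subgraph each of whose components is a 3-vertex path. An edge cut of a cubic graph that is a matching is called a blockade; a $k$-blockade is a blockade with $k$ edges. Replacing each vertex by a triangle: for each $u\in V(B)$ take a triangle $T_u$ whose three vertices are in bijection with the three edges of $B$ at $u$; for each edge $uv\in E(B)$ add an edge $\alpha(uv)$ joining the vertex of $T_u$ corresponding to $uv$ with the vertex of $T_v$ corresponding to $uv$. Let $E'(G)=\{\alpha(e):e\in E(B)\}$. For a $\Lambda$-factor $P$ of $G$, $F(P,G)$ is the subgraph of $B$ formed by the edges $uv$ with $\alpha(uv)\in E(P)$ (and their ends); $\vec F(P,G)$ is obtained by directing each such edge $uv$ from $u$ to $v$ if the component $L$ of $P$ containing $\alpha(uv)$ satisfies $|V(L)\cap V(T_u)|=1$. A cycle-dipacking of $B$ is a directed graph obtained from a subgraph of $B$ all of whose components are cycles by orienting each cycle as a directed cycle. *)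

(* Defs.v *)
From mathcomp Require Import all_boot.
Set Implicit Arguments. Unset Strict Implicit. Unset Printing Implicit Defensive.

Section Defs.
Variable T : finType.

(** A simple graph on T is a symmetric irreflexive relation [e]. *)

Definition edges (e : rel T) : {set {set T}} :=
  [set E : {set T} | [exists x, exists y, e x y && (E == [set x; y])]].

Definition cubic (e : rel T) : Prop := forall u, #|[set v | e u v]| = 3.

Definition connected_minus (e : rel T) (S : {set T}) : Prop :=
  forall x y, x \notin S -> y \notin S ->
    connect [rel a b | [&& e a b, a \notin S & b \notin S]] x y.

Definition k_connected (k : nat) (e : rel T) : Prop :=
  k < #|T| /\ forall S : {set T}, #|S| < k -> connected_minus e S.

Definition edge_cut (e : rel T) (X : {set T}) : {set {set T}} :=
  [set E in edges e | #|E :&: X| == 1].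

Definition is_matching (K : {set {set T}}) : Prop :=
  forall E1 E2, E1 \in K -> E2 \in K -> E1 != E2 -> [disjoint E1 & E2].

Definition blockade (e : rel T) (K : {set {set T}}) : Prop :=
  (exists X : {set T}, K = edge_cut e X) /\ is_matching K.

Definition triangle (e : rel T) (Tr : {set T}) : Prop :=
  #|Tr| = 3 /\ forall x y, x \in Tr -> y \in Tr -> x != y -> e x y.

Definition subrel (P : {set {set T}}) : rel T := fun x y => [set x; y] \in P.
Definition comp (P : {set {set T}}) (x : T) : {set T} :=
  [set y | connect (subrel P) x y].

Definition Lambda_factor (e : rel T) (P : {set {set T}}) : Prop :=
  P \subset edges e /\
  forall x, exists a b c,
    [/\ comp P x = [set a; b; c], [&& a != b, b != c & a != c],
        subrel P a b, subrel P b c & ~~ subrel P a c].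

(** Cycle-dipacking: a set D of arcs (ordered pairs) of e, such that the
    arcs at every vertex they touch form a directed cycle, i.e. D is the
    union of vertex-disjoint cycles of e, each oriented as a directed cycle. *)
Definition cycle_dipacking (e : rel T) (D : {set T * T}) : Prop :=
  (forall x y, (x, y) \in D -> e x y) /\
  forall x, (exists y, ((x, y) \in D) || ((y, x) \in D)) ->
    exists s : seq T, [/\ uniq s, 3 <= size s, x \in s &
      forall y, y \in s -> forall z,
        (((y, z) \in D) = (z == next s y)) /\ (((z, y) \in D) = (z == prev s y))].

End Defs.

(** Replacing each vertex of B = (T, e) by a triangle.
    The vertex of T_u corresponding to the edge uv is the pair (u, v). *)
Definition Vtri (T : finType) (e : rel T) := {p : T * T | e p.1 p.2}.

Section Tri.
Variables (T : finType) (e : rel T).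

(** Adjacency of G: (u,v)~(u,w) for v<>w (edges of T_u), and
    (u,v)~(v,u) (the edge alpha(uv)). *)
Definition Gadj : rel (Vtri e) := fun x y =>
  (((val x).1 == (val y).1) && (x != y)) || (val y == ((val x).2, (val x).1)).

Definition Tri (u : T) : {set Vtri e} := [set x : Vtri e | (val x).1 == u].

Definition alpha_in (P : {set {set Vtri e}}) (x : Vtri e) : bool :=
  [exists y : Vtri e, (val y == ((val x).2, (val x).1)) && ([set x; y] \in P)].

(** The directed graph vec F(P,G), as its set of arcs (u,v). *)
Definition Fdir (P : {set {set Vtri e}}) : {set T * T} :=
  [set p : T * T | [exists x : Vtri e,
     [&& val x == p, alpha_in P x & #|comp P x :&: Tri (val x).1| == 1]]].

End Tri.

(* Main.v *)
Require Import Defs.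
From mathcomp Require Import all_boot.
Set Implicit Arguments. Unset Strict Implicit. Unset Printing Implicit Defensive.

Lemma card3I (T' : finType) (a b c : T') (A : {set T'}) : uniq [:: a; b; c] ->
  #|[set a; b; c] :&: A| = (a \in A) + (b \in A) + (c \in A).
Proof.
move=> u.
have -> : #|[set a;b;c] :&: A| = #|[seq w <- [:: a;b;c] | w \in A]|.
  apply: eq_card => w; rewrite !inE mem_filter !inE.
  by case: (w \in A); case: (w == a); case: (w == b); case: (w == c).
have /card_uniqP -> := filter_uniq (fun w => w \in A) u.
by rewrite size_filter /= addn0 addnA.
Qed.

Lemma cards3E (T' : finType) (A : {set T'}) : #|A| = 3 ->
  exists x y z, uniq [:: x; y; z] /\ A = [set x; y; z].
Proof.
move=> h; have : 0 < #|A| by rewrite h.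
case/card_gt0P => x hx.
have : #|A :\ x| == 2 by move: h; rewrite (cardsD1 x) hx add1n => -[->].
case/cards2P => y [z [nyz E]].
have hy : y \in A :\ x by rewrite E !inE eqxx.
have hz : z \in A :\ x by rewrite E !inE eqxx orbT.
rewrite !inE in hy hz; case/andP: hy => nyx _; case/andP: hz => nzx _.
exists x, y, z; split.
  by rewrite /= !inE !negb_or nyz eq_sym nyx eq_sym nzx.
rewrite -(setD1K hx) E; apply/setP => w; rewrite !inE; by rewrite orbA.
Qed.

Lemma card2I (T' : finType) (a b : T') (A : {set T'}) : a != b ->
  #|[set a; b] :&: A| = (a \in A) + (b \in A).
Proof.
move=> u.
have -> : #|[set a;b] :&: A| = #|[seq w <- [:: a;b] | w \in A]|.
  apply: eq_card => w; rewrite !inE mem_filter !inE.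
  by case: (w \in A); case: (w == a); case: (w == b).
have u2 : uniq [:: a; b] by rewrite /= inE u.
have /card_uniqP -> := filter_uniq (fun w => w \in A) u2.
by rewrite size_filter /= addn0.
Qed.

Lemma next_neq_prev (T' : eqType) (s : seq T') (x : T') :
  uniq s -> 3 <= size s -> x \in s -> next s x != prev s x.
Proof.
move=> U hs hx.
rewrite -(next_rot (index x s) U) -(prev_rot (index x s) U).
have U' := U; rewrite -(rot_uniq (index x s)) in U'.
have S' := hs; rewrite -(size_rot (index x s)) in S'.
rewrite (rot_index hx) in U' S' *.
move: (drop _ _ ++ _) U' S' => l.
case: l => [|a [|b t]] // U' _.
have hnx : x \notin a :: b :: t by case/andP: U'.
have hna : a \notin b :: t by case/andP: U' => _ /andP[].
rewrite prev_nth mem_head (memNindex hnx).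
have := nth_last x (x :: a :: b :: t); rewrite /= => ->.
rewrite eqxx; apply: contraNneq hna => ->; exact: mem_last.
Qed.

Lemma set2_eq (T' : finType) (a b x y : T') : [set a; b] = [set x; y] ->
  (a = x /\ b = y) \/ (a = y /\ b = x).
Proof.
move=> E.
have ha : a \in [set x; y] by rewrite -E set21.
have hb : b \in [set x; y] by rewrite -E set22.
have hx : x \in [set a; b] by rewrite E set21.
have hy : y \in [set a; b] by rewrite E set22.
move: ha hb hx hy; rewrite !inE => /orP[]/eqP ha /orP[]/eqP hb; subst a b => hx hy.
- by left; split => //; move: hy; rewrite orbb => /eqP.
- by left.
- by right.
- by right; split => //; move: hx; rewrite orbb => /eqP.
Qed.

Section Basics.
Variables (T : finType) (e : rel T).
Hypothesis e_sym : symmetric e.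
Hypothesis e_irr : irreflexive e.
Hypothesis B_cubic : cubic e.

Local Notation V := (Vtri e).
Local Notation vu x := (val x).1.
Local Notation vv x := (val x).2.

Lemma vP (x : V) : e (vu x) (vv x). Proof. exact: valP x. Qed.
Lemma swP (x : V) : e (vv x) (vu x). Proof. by rewrite e_sym; exact: vP. Qed.
Definition sw (x : V) : V := @exist _ (fun p : T * T => e p.1 p.2) (vv x, vu x) (swP x).

Lemma vtri_eq (x y : V) : vu x = vu y -> vv x = vv y -> x = y.
Proof.
move=> h1 h2; apply: val_inj.
by rewrite [val x]surjective_pairing [val y]surjective_pairing h1 h2.
Qed.

Lemma vuv (x : V) : vu x != vv x.
Proof. by apply: contraTneq (vP x) => ->; rewrite e_irr. Qed.

Lemma swK : involutive sw. Proof. by move=> x; apply: vtri_eq. Qed.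
Lemma sw_inj : injective sw. Proof. exact: inv_inj swK. Qed.
Lemma sw_neq (x : V) : sw x != x.
Proof.
apply/negP => /eqP h; have h1 := congr1 (fun z : V => (val z).1) h.
by move: (vuv x); rewrite /= in h1; rewrite h1 eqxx.
Qed.

Lemma sw_tri (x y : V) : vu x = vu y -> sw x != y.
Proof. by move=> h; apply/eqP => hh; move: (vuv x); rewrite h -hh /= eqxx. Qed.

Lemma GadjP (x y : V) : Gadj x y -> x != y /\ (vu x = vu y \/ y = sw x).
Proof.
rewrite /Gadj => /orP[/andP[/eqP h1 h2] | /eqP h]; first by split; [|left].
have hy : y = sw x by apply: val_inj.
by split; [rewrite hy eq_sym sw_neq | right].
Qed.

Lemma Gadj_sw (x : V) : Gadj x (sw x). Proof. by rewrite /Gadj eqxx orbT. Qed.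
Lemma Gadj_tri (x y : V) : vu x = vu y -> x != y -> Gadj x y.
Proof. by move=> h1 h2; rewrite /Gadj h1 eqxx h2. Qed.

Lemma in_Tri (x : V) u : (x \in Tri e u) = (vu x == u). Proof. by rewrite inE. Qed.

Lemma tri3 (x y : V) : vu x = vu y -> x != y -> exists t : V,
  [/\ vu t = vu x, t != x, t != y &
      forall w : V, vu w = vu x -> [|| w == x, w == y | w == t]].
Proof.
move=> hxy nxy.
have hx2 : vv x \in [set v | e (vu x) v] by rewrite inE; exact: vP.
have hy2 : vv y \in [set v | e (vu x) v] by rewrite inE hxy; exact: vP.
have n2 : vv x != vv y by apply: contra nxy => /eqP h; apply/eqP; apply: vtri_eq.
have : #|[set v | e (vu x) v] :\: [set vv x; vv y]| == 1.
  rewrite cardsD (setIidPr _) ?cards2 ?n2 ?B_cubic //.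
  by apply/subsetP => z; rewrite !inE => /orP[]/eqP->; rewrite -inE.
case/cards1P => z hz.
have : z \in [set v | e (vu x) v] :\: [set vv x; vv y] by rewrite hz set11.
rewrite !inE => /andP[/norP[hzx hzy] ez].
exists (@exist _ (fun p : T * T => e p.1 p.2) (vu x, z) ez); split => //.
- by apply: contra hzx => /eqP <-.
- by apply: contra hzy => /eqP <-.
move=> w hw.
have : vv w \in [set v | e (vu x) v] by rewrite inE -hw; exact: vP.
case: (eqVneq (vv w) (vv x)) => [h1 _| h1].
  by rewrite (vtri_eq hw h1) eqxx.
case: (eqVneq (vv w) (vv y)) => [h2 _| h2].
  by rewrite (vtri_eq (etrans hw hxy) h2) eqxx orbT.
move=> hw2.
have : vv w \in [set v | e (vu x) v] :\: [set vv x; vv y] 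
  by rewrite !inE negb_or h1 h2 /=; move: hw2; rewrite inE.
by rewrite hz inE => /eqP h3; rewrite (@vtri_eq w (exist _ (vu x, z) ez) hw h3) eqxx !orbT.
Qed.


Section Lambda.
Variable P : {set {set V}}.
Hypothesis HP : Lambda_factor (@Gadj T e) P.

Lemma subrelC (x y : V) : Defs.subrel P x y = Defs.subrel P y x.
Proof. by rewrite /Defs.subrel setUC. Qed.

Lemma comp_sym : connect_sym (Defs.subrel P).
Proof. exact: sym_connect_sym subrelC. Qed.

Lemma comp_id (x : V) : x \in Defs.comp P x.
Proof. by rewrite inE connect0. Qed.

Lemma comp_edge (x y : V) : Defs.subrel P x y -> y \in Defs.comp P x.
Proof. by move=> h; rewrite inE connect1. Qed.

Lemma comp_eq (x y : V) : y \in Defs.comp P x -> Defs.comp P y = Defs.comp P x.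
Proof.
rewrite inE => h; apply/setP => z; rewrite !inE.
by rewrite (same_connect comp_sym h z).
Qed.

Lemma comp_meet (x y z : V) : z \in Defs.comp P x -> z \in Defs.comp P y -> Defs.comp P x = Defs.comp P y.
Proof. by move=> hx hy; rewrite -(comp_eq hx) (comp_eq hy). Qed.

Lemma comp_closed (x y z : V) : y \in Defs.comp P x -> Defs.subrel P y z -> z \in Defs.comp P x.
Proof. by move=> hy hyz; rewrite -(comp_eq hy) comp_edge. Qed.

Lemma subrelG (x y : V) : Defs.subrel P x y -> x != y /\ (vu x = vu y \/ y = sw x).
Proof.
move=> h; have := subsetP HP.1 _ h.
rewrite inE => /existsP[p /existsP[q /andP[hpq /eqP E]]].
have [npq H] := GadjP hpq.
have hx : x \in [set p; q] by rewrite -E set21.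
have hy : y \in [set p; q] by rewrite -E set22.
have hp : p \in [set x; y] by rewrite E set21.
have hq : q \in [set x; y] by rewrite E set22.
move: hx hy hp hq; rewrite !inE => /orP[]/eqP hx /orP[]/eqP hy; subst x y => hp hq.
- by move: hq; rewrite orbb => /eqP hh; rewrite hh eqxx in npq.
- by split.
- split; first by rewrite eq_sym.
  case: H => [->|->]; first by left.
  by right; rewrite swK.
- by move: hp; rewrite orbb => /eqP hh; rewrite hh eqxx in npq.
Qed.

Lemma nbr (x : V) : exists y, Defs.subrel P x y.
Proof.
case: (HP.2 x) => a [b [c [E _ hab hbc hac]]].
have : x \in [set a; b; c] by rewrite -E comp_id.
rewrite !inE => /orP[/orP[]|]/eqP->; [by exists b | by exists c | by exists b; rewrite subrelC].
Qed.

Ltac setperm := apply/setP => ?; rewrite !inE; by do ![case: eqP => _].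

Lemma K3 (x y : V) : Defs.subrel P x y -> exists r,
  [/\ Defs.comp P x = [set x; y; r], uniq [:: x; y; r] &
      (Defs.subrel P x r && ~~ Defs.subrel P y r) || (Defs.subrel P y r && ~~ Defs.subrel P x r)].
Proof.
move=> hxy; have [nxy _] := subrelG hxy.
case: (HP.2 x) => a [b [c [E /and3P[nab nbc nac] hab hbc hac]]].
have hx : x \in [set a; b; c] by rewrite -E comp_id.
have hy : y \in [set a; b; c] by rewrite -E comp_edge.
have hba : Defs.subrel P b a by rewrite subrelC.
have hcb : Defs.subrel P c b by rewrite subrelC.
have hca : ~~ Defs.subrel P c a by rewrite subrelC.
have nba : b != a by rewrite eq_sym.
have ncb : c != b by rewrite eq_sym.
have nca : c != a by rewrite eq_sym.
rewrite E; move: hx hy hxy nxy; rewrite !inE => /orP[/orP[]|]/eqP hx /orP[/orP[]|]/eqP hy; subst x y;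
  rewrite ?eqxx // => hxy _;
  try (by rewrite hxy in hac); try (by rewrite hxy in hca).
- exists c; split; first by setperm.
    by rewrite /= !inE negb_or nab nac nbc.
  by rewrite hbc (negbTE hac) orbT.
- exists c; split; first by setperm.
    by rewrite /= !inE negb_or nba nbc nac.
  by rewrite hbc (negbTE hac).
- exists a; split; first by setperm.
    by rewrite /= !inE negb_or nbc nba nca.
  by rewrite hba (negbTE hca).
- exists a; split; first by setperm.
    by rewrite /= !inE negb_or ncb nca nba.
  by rewrite hba (negbTE hca) orbT.
Qed.


Lemma alpha_inE (x : V) : alpha_in P x = Defs.subrel P x (sw x).
Proof.
apply/existsP/idP => [[y /andP[/eqP hy]]|h].
  by have -> : y = sw x by apply: val_inj.
by exists (sw x); rewrite eqxx.
Qed.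

Definition cc (x : V) := #|Defs.comp P x :&: Tri e (vu x)|.
Definition oo (x : V) := Defs.subrel P x (sw x) && (cc x == 1).
Definition ii (x : V) := Defs.subrel P x (sw x) && (cc x == 2).

Lemma LSW (x : V) : Defs.subrel P x (sw x) -> exists r,
  [/\ Defs.comp P x = [set x; sw x; r], uniq [:: x; sw x; r] &
   [&& vu r == vu x, Defs.subrel P x r, cc x == 2 & cc (sw x) == 1] ||
   [&& vu r == vu (sw x), Defs.subrel P (sw x) r, cc x == 1 & cc (sw x) == 2]].
Proof.
move=> h; case: (K3 h) => r [E U H]; exists r; split => //.
have Es : Defs.comp P (sw x) = [set x; sw x; r] by rewrite (comp_eq (comp_edge h)).
have U' := U; move: U' => /= /and3P[]; rewrite !inE negb_or => /andP[n1 n2] n3 _.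
rewrite /cc Es E !card3I // !in_Tri eqxx /=.
have hx1 : ((sval x).1 == (sval x).2) = false by apply: negbTE (vuv x).
have hx2 : ((sval x).2 == (sval x).1) = false by rewrite eq_sym; apply: negbTE (vuv x).
case/orP: H => /andP[h1 h2].
- have [_ [hr|hr]] := subrelG h1; last by rewrite hr eqxx in n3.
  by rewrite /= in hr; rewrite -hr /= hx1 hx2 !eqxx h1.
- have [_ [hr|hr]] := subrelG h1; last by rewrite hr swK eqxx in n2.
  by rewrite /= in hr; rewrite -hr /= hx1 hx2 !eqxx h1 /=.
Qed.

Lemma LSW1 (x : V) : Defs.subrel P x (sw x) -> (oo x || ii x).
Proof.
move=> h; rewrite /oo /ii h /=.
by case: (LSW h) => r [_ _ /orP[]/and4P[_ _ /eqP -> _]].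
Qed.

Lemma oo_sw (x : V) : oo x -> ii (sw x).
Proof.
case/andP => h /eqP h1; case: (LSW h) => r [_ _ /orP[]/and4P[_ _ /eqP h2 h3]].
  by rewrite h1 in h2.
by rewrite /ii h3 swK subrelC h.
Qed.

Lemma ii_sw (x : V) : ii x -> oo (sw x).
Proof.
case/andP => h /eqP h1; case: (LSW h) => r [_ _ /orP[]/and4P[_ _ /eqP h2 h3]];
  last by rewrite h1 in h2.
by rewrite /oo h3 swK subrelC h.
Qed.

Lemma oo_ii (x : V) : oo x -> ~~ ii x.
Proof. by case/andP => _ /eqP h; rewrite /ii h andbF. Qed.

Lemma ii_edge (x : V) : ii x -> exists r,
  [/\ Defs.comp P x = [set x; sw x; r], uniq [:: x; sw x; r], vu r = vu x & Defs.subrel P x r].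
Proof.
case/andP => h /eqP h1; case: (LSW h) => r [E U /orP[]/and4P[/eqP h2 h3 h4 h5]].
  by exists r.
by rewrite h1 in h4.
Qed.

Lemma in3 (T' : finType) (a b c z : T') : z \in [set a; b; c] -> [\/ z = a, z = b | z = c].
Proof. by rewrite !inE => /orP[/orP[]|]/eqP->; [constructor 1|constructor 2|constructor 3]. Qed.

Lemma ii_uniq (x x' : V) : ii x -> ii x' -> vu x = vu x' -> x = x'.
Proof.
move=> hx hx' hu; apply/eqP; apply/negPn/negP => nx.
have [r [E U hr hxr]] := ii_edge hx.
have nxr : x != r by move: U => /= /and3P[]; rewrite !inE negb_or => /andP[].
have [t [ht ntx ntr H]] := tri3 (esym hr) nxr.
have hsx' : Defs.subrel P x' (sw x') by case/andP: hx'.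
case/or3P: (H x' (esym hu)) => /eqP hx'e; first by rewrite hx'e eqxx in nx.
-
  have hx'c : x' \in Defs.comp P x by rewrite E hx'e !inE eqxx orbT.
  have : sw x' \in Defs.comp P x by rewrite -(comp_eq hx'c) comp_edge.
  rewrite E; case/in3 => hh.
  + by move: (sw_tri (esym hu)); rewrite hh eqxx.
  + by move: nx; rewrite (sw_inj hh) eqxx.
  + by move: (sw_neq x'); rewrite hh hx'e eqxx.
-
  have [r' [E' U' hr' hxr']] := ii_edge hx'.
  have nr't : r' != x' by move: U' => /= /and3P[]; rewrite !inE negb_or => /andP[_]; rewrite eq_sym.
  have hr'c : r' \in Defs.comp P x.
    case/or3P: (H r' (etrans hr' (esym hu))) => /eqP hh; rewrite hh ?E ?inE ?eqxx ?orbT //.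
    by move: nr't; rewrite hh hx'e eqxx.
  have ec := comp_meet hr'c (comp_edge hxr').
  have : x' \in Defs.comp P x by rewrite ec comp_id.
  rewrite E; case/in3 => hh.
  + by rewrite hh eqxx in nx.
  + by move: (sw_tri hu); rewrite hh eqxx.
  + by move: ntr; rewrite -hx'e hh eqxx.
Qed.

Lemma ii_oo (x : V) : ii x -> exists t, vu t = vu x /\ oo t.
Proof.
move=> hx; have [r [E U hr hxr]] := ii_edge hx.
have nxr : x != r by move: U => /= /and3P[]; rewrite !inE negb_or => /andP[].
have [t [ht ntx ntr H]] := tri3 (esym hr) nxr.
exists t; split => //.
have H0 : t \notin Defs.comp P x.
  by rewrite E !inE !negb_or ntx ntr /= andbT eq_sym sw_tri.
have H1 : forall w, Defs.subrel P t w -> w = sw t.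
  move=> w hw; have [ntw [hu|//]] := subrelG hw.
  exfalso; case/or3P: (H w (etrans (esym hu) ht)) => /eqP hwe.
  - apply: (negP H0); rewrite (comp_meet (_ : w \in Defs.comp P x) (comp_edge hw)) ?comp_id //.
    by rewrite hwe comp_id.
  - apply: (negP H0); rewrite (comp_meet (_ : w \in Defs.comp P x) (comp_edge hw)) ?comp_id //.
    by rewrite hwe E !inE eqxx orbT.
  - by rewrite hwe eqxx in ntw.
have [w hw] := nbr t.
have ha : Defs.subrel P t (sw t) by rewrite -(H1 _ hw).
case/orP: (LSW1 ha) => // hit.
have [r' [_ _ hr' htr']] := ii_edge hit.
by move: (sw_tri (esym hr')); rewrite -(H1 _ htr') eqxx.
Qed.


Lemma card_IO : #|[set x | ii x]| = #|[set x | oo x]|.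
Proof.
have -> : [set x | oo x] = sw @: [set x | ii x].
  apply/setP => t; rewrite inE; apply/idP/imsetP => [h|[x hx ->]].
    by exists (sw t); rewrite ?swK // inE oo_sw.
  by rewrite inE in hx; rewrite ii_sw.
by rewrite card_imset //; apply: sw_inj.
Qed.

Definition phi (x : V) := odflt x [pick t | oo t && (vu t == vu x)].

Lemma phiP (x : V) : ii x -> oo (phi x) /\ vu (phi x) = vu x.
Proof.
move=> hx; rewrite /phi; case: pickP => [t /andP[h /eqP h'] | none] //=.
have [t [h1 h2]] := ii_oo hx; by move: (none t); rewrite h2 h1 eqxx.
Qed.

Lemma phi_surj (t : V) : oo t -> exists x, [/\ ii x, vu x = vu t & phi x = t].
Proof.
move=> ht.
have E : phi @: [set x | ii x] = [set x | oo x].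
  apply/eqP; rewrite eqEcard; apply/andP; split.
    by apply/subsetP => z /imsetP[x]; rewrite !inE => hx ->; case: (phiP hx).
  rewrite card_in_imset ?card_IO // => x y; rewrite !inE => hx hy hxy.
  apply: ii_uniq => //; by rewrite -(phiP hx).2 hxy (phiP hy).2.
have : t \in phi @: [set x | ii x] by rewrite E inE.
case/imsetP => x; rewrite inE => hx ->; exists x; split => //.
by rewrite (phiP hx).2.
Qed.

Lemma oo_uniq (t t' : V) : oo t -> oo t' -> vu t = vu t' -> t = t'.
Proof.
move=> h h' hu; have [x [hx hxu <-]] := phi_surj h; have [x' [hx' hxu' <-]] := phi_surj h'.
by rewrite (ii_uniq hx hx') // hxu hxu' hu.
Qed.

Lemma oo_ii_ex (t : V) : oo t -> exists x, ii x /\ vu x = vu t.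
Proof. by move=> h; have [x [hx hxu _]] := phi_surj h; exists x. Qed.

Lemma FdirE (p : T * T) : (p \in Fdir P) = [exists x, (val x == p) && oo x].
Proof. by rewrite inE; apply: eq_existsb => x; rewrite alpha_inE. Qed.

Definition act (u : T) := [exists x, oo x && (vu x == u)].
Definition succ (u : T) := if [pick x | oo x && (vu x == u)] is Some x then vv x else u.

Lemma succP (u : T) (x : V) : oo x -> vu x = u -> succ u = vv x.
Proof.
move=> hx hxu; rewrite /succ; case: pickP => [y /andP[hy /eqP hyu]|none].
  by rewrite (oo_uniq hy hx) // hyu hxu.
by move: (none x); rewrite hx hxu eqxx.
Qed.

Lemma succ_nact (u : T) : ~~ act u -> succ u = u.
Proof.
move=> h; rewrite /succ; case: pickP => [y hy|//].
by move: h; rewrite /act; case/existsP; exists y.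
Qed.

Lemma actP (u : T) : act u -> exists x, [/\ oo x, vu x = u & succ u = vv x].
Proof. by case/existsP => x /andP[hx /eqP hxu]; exists x; rewrite (succP hx hxu). Qed.

Lemma act_succ (u : T) : act u -> act (succ u).
Proof.
case/actP => x [hx hxu ->].
have [t [htu ht]] := ii_oo (oo_sw hx).
by apply/existsP; exists t; rewrite ht htu /= eqxx.
Qed.

Lemma succ_inj : injective succ.
Proof.
have key : forall u1 u2, act u1 -> ~~ act u2 -> succ u1 <> succ u2.
  move=> u1 u2 /actP[x [hx hxu ->]] h2; rewrite (succ_nact h2) => hh.
  have [t [htu ht]] := ii_oo (oo_sw hx).
  by move: h2; rewrite /act; case/existsP; exists t; rewrite ht htu /= hh.
move=> u1 u2 h.
case: (boolP (act u1)) => a1; case: (boolP (act u2)) => a2.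
- have [x1 [h1 hu1 hs1]] := actP a1; have [x2 [h2 hu2 hs2]] := actP a2.
  have := ii_uniq (oo_sw h1) (oo_sw h2); rewrite /= -hs1 -hs2 h => /(_ erefl) /sw_inj hx.
  by rewrite -hu1 -hu2 hx.
- by case: (key _ _ a1 a2 h).
- by case: (key _ _ a2 a1 (esym h)).
- by rewrite -(succ_nact a1) -(succ_nact a2).
Qed.

Lemma D_out (u z : T) : ((u, z) \in Fdir P) = act u && (succ u == z).
Proof.
rewrite FdirE; apply/existsP/andP => [[x /andP[/eqP hx ho]]|[ha /eqP hs]].
  have hxu : vu x = u by rewrite hx.
  split; first by apply/existsP; exists x; rewrite ho hxu eqxx.
  by rewrite (succP ho hxu) hx.
have [x [ho hxu hs']] := actP ha.
exists x; rewrite ho andbT; apply/eqP.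
by rewrite [val x]surjective_pairing hxu -hs' hs.
Qed.


Lemma act_iter n u : act u -> act (iter n succ u).
Proof. by elim: n => //= n IH h; apply: act_succ (IH h). Qed.

Lemma act_orbit u y : act u -> y \in orbit succ u -> act y.
Proof. by move=> h /trajectP[i _ ->]; apply: act_iter. Qed.

Lemma no_loop u : act u -> succ u != u.
Proof. by case/actP => x [_ <- ->]; rewrite eq_sym vuv. Qed.

Lemma no_2cycle u : act u -> succ (succ u) != u.
Proof.
move=> ha; have [x [hx hxu hs]] := actP ha.
have [y [hy hyu hs2]] := actP (act_succ ha).
rewrite hs2; apply/eqP => hh.
have hyx : y = sw x.
  apply: vtri_eq; rewrite /= in hyu hs hh hxu *; [by rewrite hyu hs | by rewrite hh hxu].
by move: (oo_ii hy); rewrite hyx oo_sw.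
Qed.

Lemma a1_cd : cycle_dipacking e (Fdir P).
Proof.
split.
  move=> x y; rewrite D_out => /andP[ha /eqP hs].
  by have [z [hz hzu hs']] := actP ha; rewrite -hs hs' -hzu vP.
move=> x [y hy].
have ha : act x.
  by case/orP: hy; rewrite D_out => /andP[ha /eqP hs] //; rewrite -hs act_succ.
exists (orbit succ x); split.
- exact: orbit_uniq.
- have U : uniq [:: x; succ x; succ (succ x)].
    rewrite /= !inE !negb_or eq_sym (no_loop ha) eq_sym (no_2cycle ha) /=.
    by rewrite eq_sym (no_loop (act_succ ha)).
  have h1 : succ x \in orbit succ x by apply: mem_orbit; apply: in_orbit.
  have h2 : succ (succ x) \in orbit succ x by apply: mem_orbit.
  have sub : {subset [:: x; succ x; succ (succ x)] <= orbit succ x}.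
    move=> z; rewrite !inE; case/or3P => /eqP -> //.
    exact: in_orbit.
  exact: (uniq_leq_size U sub).
- exact: in_orbit.
move=> y0 hy0 z.
have hay := act_orbit ha hy0.
have cyc := cycle_orbit succ_inj x.
have hn : next (orbit succ x) y0 = succ y0 := esym (eqP (next_cycle cyc hy0)).
split; first by rewrite D_out hay /= hn eq_sym.
set p := prev (orbit succ x) y0.
have hp : p \in orbit succ x by rewrite mem_prev.
have hsp : succ p = y0 by rewrite (eqP (next_cycle cyc hp)) next_prev ?orbit_uniq.
rewrite D_out; apply/andP/eqP => [[haz /eqP hz]|->].
  by apply: succ_inj; rewrite hz hsp.
by rewrite (act_orbit ha hp) hsp eqxx.
Qed.


Lemma tri_edge (x : V) : exists y z, [/\ vu y = vu x, vu z = vu x & Defs.subrel P y z].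
Proof.
case: (boolP (Defs.subrel P x (sw x))) => ha.
  case/orP: (LSW1 ha) => h.
    have [x' [hx' hu]] := oo_ii_ex h; have [r [_ _ hr hxr]] := ii_edge hx'.
    by exists x', r; split => //; rewrite hr hu.
  by have [r [_ _ hr hxr]] := ii_edge h; exists x, r.
have [w hw] := nbr x; have [_ [hu|hu]] := subrelG hw.
  by exists x, w.
by rewrite -hu hw in ha.
Qed.

Lemma tri_same (x y w : V) : Gadj x y -> Gadj y w -> Gadj x w -> y != w -> x != w ->
  vu x = vu y.
Proof.
move=> hxy hyw hxw nyw nxw.
have [_ [h|h]] := GadjP hxy => //.
have [_ [h1|h1]] := GadjP hxw; last by rewrite h1 -h eqxx in nyw.
have [_ [h2|h2]] := GadjP hyw; last by rewrite h2 h swK eqxx in nxw.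
by rewrite h1 h2.
Qed.

Lemma a1_tri (Tr : {set V}) : triangle (@Gadj T e) Tr -> exists2 E, E \in P & E \subset Tr.
Proof.
case=> hc hadj.
have [x [y [z [U E]]]] := cards3E hc.
move: U => /= /and3P[]; rewrite !inE !negb_or => /andP[nxy nxz] nyz _.
have iX : x \in Tr by rewrite E !inE eqxx.
have iY : y \in Tr by rewrite E !inE eqxx orbT.
have iZ : z \in Tr by rewrite E !inE eqxx !orbT.
have hxy := hadj _ _ iX iY nxy; have hxz := hadj _ _ iX iZ nxz.
have hyz := hadj _ _ iY iZ nyz; have hyx := hadj _ _ iY iX (contra_neq esym nxy).
have hzx := hadj _ _ iZ iX (contra_neq esym nxz).
have e1 : vu x = vu y := tri_same hxy hyz hxz nyz nxz.
have e2 : vu x = vu z := tri_same hxz (hadj _ _ iZ iY (contra_neq esym nyz)) hxy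
  (contra_neq esym nyz) nxy.
have [t [ht ntx nty H]] := tri3 e1 nxy.
have hzt : z = t.
  by case/or3P: (H z (esym e2)) => /eqP // hh; [rewrite hh eqxx in nxz | rewrite hh eqxx in nyz].
have sub : forall w, vu w = vu x -> w \in Tr.
  by move=> w hw; case/or3P: (H w hw) => /eqP ->; rewrite // -hzt.
have [a [b [ha hb hab]]] := tri_edge x.
exists [set a; b] => //.
by apply/subsetP => w; rewrite !inE => /orP[]/eqP->; apply: sub.
Qed.

Lemma in_cut (X : {set V}) (a b : V) : Gadj a b -> a \in X -> b \notin X ->
  [set a; b] \in edge_cut (@Gadj T e) X.
Proof.
move=> hab ha hb; rewrite inE; apply/andP; split.
  by rewrite inE; apply/existsP; exists a; apply/existsP; exists b; rewrite hab eqxx.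
have -> : [set a; b] :&: X = [set a].
  apply/setP => w; rewrite !inE.
  case: (eqVneq w a) => [->|nwa]; first by rewrite ha.
  case: (eqVneq w b) => [->|nwb] //=.
  by rewrite (negbTE hb).
by rewrite cards1.
Qed.

Lemma blk_closed (X : {set V}) : is_matching (edge_cut (@Gadj T e) X) ->
  forall x y : V, vu x = vu y -> (x \in X) = (y \in X).
Proof.
move=> hm.
suff key : forall x y : V, vu x = vu y -> x \in X -> y \notin X -> False.
  move=> x y h; case: (boolP (x \in X)) => hx; case: (boolP (y \in X)) => hy //.
  - by case: (key _ _ h hx hy).
  - by case: (key _ _ (esym h) hy hx).
move=> x y h hx hy.
have nxy : x != y by apply: contraNneq hy => <-.
have [t [ht ntx nty _]] := tri3 h nxy.
case: (boolP (t \in X)) => htX.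
- have E1 := in_cut (Gadj_tri h nxy) hx hy.
  have E2 := in_cut (Gadj_tri (etrans ht h) nty) htX hy.
  have ne : [set x; y] != [set t; y].
    apply/negP => /eqP hh; have : x \in [set t; y] by rewrite -hh set21.
    by rewrite !inE (negbTE nxy) eq_sym (negbTE ntx).
  have := disjointFr (hm _ _ E1 E2 ne) (set22 x y).
  by rewrite set22.
- have E1 := in_cut (Gadj_tri h nxy) hx hy.
  have E2 := in_cut (Gadj_tri (esym ht) (contra_neq esym ntx)) hx htX.
  have ne : [set x; y] != [set x; t].
    apply/negP => /eqP hh; have : y \in [set x; t] by rewrite -hh set22.
    by rewrite !inE eq_sym (negbTE nxy) eq_sym (negbTE nty).
  have := disjointFr (hm _ _ E1 E2 ne) (set21 x y).
  by rewrite set21.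
Qed.


Lemma a1_blk (K : {set {set V}}) : blockade (@Gadj T e) K -> #|K| = 3 ->
  (#|K :&: P| == 0) || (#|K :&: P| == 2).
Proof.
case=> [[X ->] hm] hK.
have hX := blk_closed hm.
set Z := [set x | [&& x \in X, sw x \notin X & Defs.subrel P x (sw x)]].
have c1 : #|edge_cut (@Gadj T e) X :&: P| = #|Z|.
  have -> : edge_cut (@Gadj T e) X :&: P = (fun x => [set x; sw x]) @: Z.
    apply/setP => E; apply/idP/imsetP.
    - rewrite !inE => /andP[/andP[hE hc] hP].
      case/existsP: hE => p /existsP[q /andP[hpq /eqP hE]].
      subst E; have [npq hsw] := GadjP hpq.
      rewrite card2I // in hc.
      case: (boolP (p \in X)) hc => hp; case: (boolP (q \in X)) => hq //= _.
      + have hqs : q = sw p by case: hsw => // hh; move: hq; rewrite -(hX _ _ hh) hp.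
        exists p; last by rewrite hqs.
        rewrite /Z inE hp -hqs hq /=; exact: hP.
      + have hqs : q = sw p by case: hsw => // hh; move: hq; rewrite -(hX _ _ hh) (negbTE hp).
        exists q; last by rewrite hqs swK setUC.
        by rewrite /Z inE hq hqs swK hp /= subrelC -hqs.
    - case=> x; rewrite /Z inE => /and3P[hx hsx ha] ->.
      by rewrite inE in_cut ?Gadj_sw.
  rewrite card_in_imset // => x y; rewrite /Z !inE => /and3P[hx hsx _] /and3P[hy hsy _] hh.
  have : y \in [set x; sw x] by rewrite hh set21.
  rewrite !inE => /orP[]/eqP // hyx.
  by move: hsx; rewrite -hyx hy.
set O := [set x | oo x].
set Z1 := Z :&: O.
set Z2 := Z :\: O.
have c2 : #|Z1| + #|Z2| = #|Z| by apply: cardsID.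
set OX := [set x | oo x && (x \in X)].
set IX := [set x | ii x && (x \in X)].
have cOI : #|IX| = #|OX|.
  have -> : OX = phi @: IX.
    apply/setP => t; rewrite inE; apply/andP/imsetP => [[ht htX]|[x hx ->]].
      have [x [hx hxu hpx]] := phi_surj ht.
      by exists x => //; rewrite inE hx (hX _ _ hxu) htX.
    rewrite inE in hx; case/andP: hx => hx hxX.
    have [h1 h2] := phiP hx; by rewrite h1 (hX _ _ h2).
  rewrite card_in_imset // => x y; rewrite !inE => /andP[hx _] /andP[hy _] hh.
  by apply: ii_uniq => //; rewrite -(phiP hx).2 hh (phiP hy).2.
set S := [set x | sw x \in X].
have cO := cardsID S OX.
have cI := cardsID S IX.
have cS : #|OX :&: S| = #|IX :&: S|.
  have -> : OX :&: S = sw @: (IX :&: S).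
    apply/setP => t; rewrite !inE; apply/idP/imsetP => [/andP[/andP[ht htX] hs]|[x hx ->]].
      by exists (sw t); rewrite ?swK // !inE oo_sw // swK htX hs.
    by move: hx; rewrite !inE swK => /andP[/andP[hx hxX] hs]; rewrite ii_sw // hxX hs.
  by rewrite card_imset //; apply: sw_inj.
have e1 : OX :\: S = Z1.
  apply/setP => x; rewrite !inE; apply/idP/idP.
    by case/andP => hs /andP[ho hx]; rewrite hx hs ho /= andbT; case/andP: ho.
  by case/andP => /and3P[hx hs _] ho; rewrite hs ho hx.
have e2 : IX :\: S = Z2.
  apply/setP => x; rewrite !inE; apply/idP/idP.
    case/andP => hs /andP[hi hx]; rewrite hx hs /=.
    rewrite (negbTE (contraL (@oo_ii x) hi)) /=.
    by case/andP: hi => ->.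
  case/andP => ho /and3P[hx hs ha]; rewrite hs hx andbT.
  by case/orP: (LSW1 ha) => // h; rewrite h in ho.
have c3 : #|Z1| = #|Z2|.
  apply/eqP; rewrite -(eqn_add2l #|OX :&: S|) -e1 -e2 cO cS cI cOI.
  done.
have hle : #|edge_cut (@Gadj T e) X :&: P| <= 3 by rewrite -hK subset_leq_card ?subsetIl.
rewrite c1 -c2 -c3 in hle *.
by move: hle; case: #|Z1| => [|[|n]] //; rewrite !addSn !addnS ltnS ltnS ltnS ltn0.
Qed.

End Lambda.

Lemma path_comp (P : {set {set V}}) (a b c : V) : uniq [:: a; b; c] ->
  Defs.subrel P a b -> Defs.subrel P b c ->
  (forall p q, p \in [set a; b; c] -> Defs.subrel P p q -> q \in [set a; b; c]) ->
  forall x, x \in [set a; b; c] -> Defs.comp P x = [set a; b; c].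
Proof.
move=> U hab hbc H x hx.
have cl : closed (Defs.subrel P) (mem [set a; b; c]).
  by apply: (intro_closed (comp_sym P)) => p q hpq hp; apply: H hp hpq.
have ca : forall z, z \in [set a; b; c] -> connect (Defs.subrel P) a z.
  move=> z; rewrite !inE => /orP[/orP[]|]/eqP ->.
  - exact: connect0.
  - exact: connect1.
  - exact: connect_trans (connect1 hab) (connect1 hbc).
apply/setP => y; rewrite inE; apply/idP/idP => [hc|hy].
  by rewrite -(closed_connect cl hc).
apply: connect_trans (_ : connect (Defs.subrel P) x a) (ca y hy).
by rewrite comp_sym ca.
Qed.

Lemma vex (u v : T) : e u v -> exists x : V, val x = (u, v).
Proof. by move=> h; exists (@exist _ (fun p : T * T => e p.1 p.2) (u, v) h). Qed.

Lemma tri_other (x : V) : exists y : V, vu y = vu x /\ y != x.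
Proof.
have h3 := B_cubic (vu x).
have hx : vv x \in [set v | e (vu x) v] by rewrite inE vP.
have : 0 < #|[set v | e (vu x) v] :\ vv x|.
  by move: h3; rewrite (cardsD1 (vv x)) hx add1n => -[->].
case/card_gt0P => v; rewrite !inE => /andP[nv ev].
exists (@exist _ (fun p : T * T => e p.1 p.2) (vu x, v) ev); split => //.
by apply/negP => /eqP hh; move: nv; rewrite -hh /= eqxx.
Qed.

Section A2.
Variable D : {set T * T}.
Hypothesis HD : cycle_dipacking e D.

Definition touched u := [exists v, ((u, v) \in D) || ((v, u) \in D)].
Definition sc u := odflt u [pick w | (u, w) \in D].
Definition pr u := odflt u [pick v | (v, u) \in D].

Lemma tchP u : touched u -> [/\ forall z, ((u, z) \in D) = (z == sc u),
  forall z, ((z, u) \in D) = (z == pr u) & pr u != sc u].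
Proof.
move=> ht.
have [s [U hs hu H]] : exists s : seq T, [/\ uniq s, 3 <= size s, u \in s &
      forall y, y \in s -> forall z,
        (((y, z) \in D) = (z == next s y)) /\ (((z, y) \in D) = (z == prev s y))].
  by apply: HD.2; case/existsP: ht => v hv; exists v.
have H1 z := (H u hu z).1.
have H2 z := (H u hu z).2.
have e1 : sc u = next s u.
  rewrite /sc; case: pickP => [w hw|none] /=; first by move: hw; rewrite H1 => /eqP.
  by move: (none (next s u)); rewrite H1 eqxx.
have e2 : pr u = prev s u.
  rewrite /pr; case: pickP => [w hw|none] /=; first by move: hw; rewrite H2 => /eqP.
  by move: (none (prev s u)); rewrite H2 eqxx.
split => [z|z|]; rewrite ?e1 ?e2 //.
by rewrite eq_sym next_neq_prev.
Qed.

Lemma ntch u : ~~ touched u -> forall z, ((u, z) \in D) = false /\ ((z, u) \in D) = false.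
Proof.
move=> h z; split; apply/negbTE; apply: contra h => hz; apply/existsP; exists z;
  by rewrite hz ?orbT.
Qed.

Lemma tch_sc u : touched u -> touched (sc u) /\ pr (sc u) = u.
Proof.
move=> ht; have [h1 _ _] := tchP ht.
have hD : (u, sc u) \in D by rewrite h1.
have ht' : touched (sc u) by apply/existsP; exists u; rewrite hD orbT.
split => //; have [_ h2 _] := tchP ht'.
by apply/esym/eqP; rewrite -h2.
Qed.

Lemma tch_pr u : touched u -> touched (pr u) /\ sc (pr u) = u.
Proof.
move=> ht; have [_ h1 _] := tchP ht.
have hD : (pr u, u) \in D by rewrite h1.
have ht' : touched (pr u) by apply/existsP; exists u; rewrite hD.
split => //; have [h2 _ _] := tchP ht'.
by apply/esym/eqP; rewrite -h2.
Qed.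

Lemma e_sc u : touched u -> e u (sc u).
Proof. by move=> ht; apply: HD.1; have [h1 _ _] := tchP ht; rewrite h1. Qed.

Lemma e_pr u : touched u -> e u (pr u).
Proof. by move=> ht; rewrite e_sym; apply: HD.1; have [_ h1 _] := tchP ht; rewrite h1. Qed.

Definition tri_ok (x y : V) :=
  if touched (vu x) then (vv x == pr (vu x)) && (vv y != sc (vu x))
  else [pick z | vu z == vu x] == Some x.
Definition R (x y : V) := ((y == sw x) && (val x \in D)) || [&& vu x == vu y, x != y & tri_ok x y].
Definition PD : {set {set V}} := [set E | [exists x, exists y, R x y && (E == [set x; y])]].

Lemma PDE (a b : V) : Defs.subrel PD a b = R a b || R b a.
Proof.
rewrite /Defs.subrel inE; apply/existsP/orP => [[x /existsP[y /andP[hR /eqP E]]]|[h|h]].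
- by case: (set2_eq E) => [[-> ->]|[-> ->]]; [left | right].
- by exists a; apply/existsP; exists b; rewrite h eqxx.
- by exists b; apply/existsP; exists a; rewrite h /=; apply/eqP; apply: setUC.
Qed.

Lemma PD_nbr (q r : V) : Defs.subrel PD q r ->
  [\/ r = sw q /\ val q \in D, q = sw r /\ val r \in D,
      [/\ vu q = vu r, q != r & tri_ok q r] | [/\ vu q = vu r, q != r & tri_ok r q]].
Proof.
rewrite PDE /R => /orP[/orP[/andP[/eqP h1 h2]|/and3P[/eqP h1 h2 h3]]|/orP[/andP[/eqP h1 h2]|/and3P[/eqP h1 h2 h3]]].
- by constructor 1.
- by constructor 3.
- by constructor 2.
- by constructor 4; split; rewrite // eq_sym.
Qed.


Lemma pairE (q : V) : val q = (vu q, vv q).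
Proof. exact: surjective_pairing. Qed.

Lemma compT (y : V) : touched (vu y) -> vv y = pr (vu y) -> exists z : V,
  [/\ uniq [:: sw y; y; z], vu z = vu y,
      (forall w, vu w = vu y -> vv w != sc (vu y) -> w = y \/ w = z),
      [/\ Defs.subrel PD (sw y) y, Defs.subrel PD y z & ~~ Defs.subrel PD (sw y) z] &
      forall x, x \in [set sw y; y; z] -> Defs.comp PD x = [set sw y; y; z]].
Proof.
move=> ht hp.
have [Tout Tin nps] := tchP ht.
have [xs hxs] := vex (e_sc ht).
have hxsu : vu y = vu xs by rewrite hxs.
have nyxs : y != xs.
  apply: contra nps => /eqP hh; by rewrite -hp hh hxs.
have [z [hz nzy nzxs H]] := tri3 hxsu nyxs.
have hzs : vv z != sc (vu y).
  apply: contra nzxs => /eqP h; apply/eqP; apply: vtri_eq; by rewrite ?hz ?hxs ?h.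
have hzp : vv z != pr (vu y).
  apply: contra nzy => /eqP h; apply/eqP; apply: vtri_eq; by rewrite ?hz ?hp ?h.
have [htv hsv] := tch_pr ht.
have nb_y : forall q, Defs.subrel PD y q -> q = sw y \/ q = z.
  move=> q hq; case: (PD_nbr hq) => [[-> _]|[h1 _]|[h1 h2 h3]|[h1 h2 h3]].
  - by left.
  - by left; rewrite h1 swK.
  - right; move: h3; rewrite /tri_ok ht => /andP[_ h3].
    case/or3P: (H q (esym h1)) => /eqP hh //.
      by rewrite hh eqxx in h2.
    by move: h3; rewrite hh hxs eqxx.
  - exfalso; move: h3; rewrite /tri_ok -h1 ht => /andP[/eqP h3 _].
    by move: h2; rewrite (@vtri_eq y q h1) ?eqxx // h3 hp.
have nb_z : forall q, Defs.subrel PD z q -> q = y.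
  move=> q hq; case: (PD_nbr hq) => [[_ hD]|[h1 hD]|[h1 h2 h3]|[h1 h2 h3]].
  - by move: hD; rewrite pairE hz Tout (negbTE hzs).
  - have e1 : vv q = vu y by rewrite -hz h1.
    have e2 : vu q = vv z by rewrite h1.
    by move: hD; rewrite pairE e1 Tin e2 (negbTE hzp).
  - by move: h3; rewrite /tri_ok hz ht (negbTE hzp).
  - move: h3; rewrite /tri_ok -h1 hz ht => /andP[/eqP h3 _].
    by apply: vtri_eq; [rewrite -h1 hz | rewrite h3 hp].
have nb_sy : forall q, Defs.subrel PD (sw y) q -> q = y.
  move=> q hq; case: (PD_nbr hq) => [[-> _]|[h1 _]|[h1 h2 h3]|[h1 h2 h3]].
  - by rewrite swK.
  - by apply: sw_inj.
  - move: h3; rewrite /tri_ok /= hp htv hsv => /andP[/eqP h3 _].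
    by have [_ _ hh] := tchP htv; move: hh; rewrite hsv -h3 eqxx.
  - move: h3; rewrite /tri_ok -h1 /= hp htv hsv => /andP[_].
    by rewrite eqxx.
have hsyy : Defs.subrel PD (sw y) y.
  by rewrite PDE /R swK eqxx /= pairE /= hp Tin eqxx.
have hyz : Defs.subrel PD y z.
  rewrite PDE; apply/orP; left; rewrite /R; apply/orP; right.
  by rewrite hz eqxx eq_sym nzy /tri_ok ht hp eqxx hzs.
have U : uniq [:: sw y; y; z].
  by rewrite /= !inE !negb_or sw_neq sw_tri // eq_sym nzy.
exists z; split => //.
- move=> w hw hws; case/or3P: (H w hw) => /eqP hh; [by left | | by right].
  by move: hws; rewrite hh hxs eqxx.
- by split => //; apply/negP => /nb_sy hh; rewrite hh eqxx in nzy.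
apply: path_comp => // p q hp' hpq.
case/in3: hp' => hh; subst p.
- by rewrite (nb_sy _ hpq) !inE eqxx orbT.
- by case: (nb_y _ hpq) => ->; rewrite !inE eqxx ?orbT.
- by rewrite (nb_z _ hpq) !inE eqxx orbT.
Qed.

Lemma compU (x0 : V) : ~~ touched (vu x0) -> exists a b c,
  [/\ Defs.comp PD x0 = [set a; b; c], [&& a != b, b != c & a != c],
      Defs.subrel PD a b, Defs.subrel PD b c & ~~ Defs.subrel PD a c].
Proof.
move=> ht.
have [m hm hpick] : exists2 m : V, (vu m = vu x0) & ([pick z | vu z == vu x0] = Some m).
  case E : [pick z | vu z == vu x0] => [m|].
    by move: E; case: pickP => // m' /eqP hm' [<-]; exists m'.
  by move: E; case: pickP => // none _; move: (none x0); rewrite eqxx.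
have nb : forall p q, vu p = vu x0 -> Defs.subrel PD p q ->
    [/\ vu q = vu x0, p != q & (p = m \/ q = m)].
  move=> p q hpu hq; case: (PD_nbr hq) => [[_ hD]|[h1 hD]|[h1 h2 h3]|[h1 h2 h3]].
  - by move: hD; rewrite pairE hpu (ntch ht _).1.
  - have e1 : vv q = vu x0 by rewrite -hpu h1.
    by move: hD; rewrite pairE e1 (ntch ht _).2.
  - move: h3; rewrite /tri_ok hpu (negbTE ht) hpick => /eqP [hh].
    by split => //; try (by rewrite -h1); left.
  - move: h3; rewrite /tri_ok -h1 hpu (negbTE ht) hpick => /eqP [hh].
    by split => //; try (by rewrite -h1); right.
have [y1 [hy1 ny1]] := tri_other m.
have [t [ht1 ntm nty H]] := tri3 (esym hy1) (contra_neq esym ny1).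
have hmy1 : Defs.subrel PD y1 m.
  rewrite PDE; apply/orP; right; rewrite /R; apply/orP; right.
  by rewrite hy1 eqxx eq_sym ny1 /tri_ok hm (negbTE ht) hpick eqxx.
have hmt : Defs.subrel PD m t.
  rewrite PDE; apply/orP; left; rewrite /R; apply/orP; right.
  by rewrite ht1 eqxx eq_sym ntm /tri_ok hm (negbTE ht) hpick eqxx.
have ny1t : y1 != t by rewrite eq_sym.
exists y1, m, t; split => //.
- apply: path_comp => //.
  + by rewrite /= !inE !negb_or ny1 ny1t eq_sym ntm.
  + move=> p q hp' hpq.
    have hpu : vu p = vu x0 by case/in3: hp' => ->; rewrite ?hy1 ?ht1 hm.
    have [hqu _ _] := nb _ _ hpu hpq.
    by case/or3P: (H q (etrans hqu (esym hm))) => /eqP ->; rewrite !inE eqxx ?orbT.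
  + by case/or3P: (H x0 (esym hm)) => /eqP ->; rewrite !inE eqxx ?orbT.
- by rewrite ny1 eq_sym ntm ny1t.
- apply/negP => hh; have [_ _ [h|h]] := nb _ _ (etrans hy1 hm) hh.
    by rewrite h eqxx in ny1.
  by rewrite h eqxx in ntm.
Qed.


Lemma LPD : Lambda_factor (@Gadj T e) PD.
Proof.
split.
  apply/subsetP => E; rewrite inE => /existsP[x /existsP[y /andP[hR /eqP ->]]].
  rewrite inE; apply/existsP; exists x; apply/existsP; exists y; rewrite eqxx andbT.
  case/orP: hR => [/andP[/eqP -> _]|/and3P[/eqP h1 h2 _]]; [exact: Gadj_sw | exact: Gadj_tri].
move=> x0; case: (boolP (touched (vu x0))) => ht; last exact: compU.
case: (eqVneq (vv x0) (sc (vu x0))) => hs.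
  have [htw hpw] := tch_sc ht.
  have ht' : touched (vu (sw x0)) by rewrite /= hs.
  have hp' : vv (sw x0) = pr (vu (sw x0)) by rewrite /= hs hpw.
  have [z [U hz Hw [h1 h2 h3] Hc]] := compT ht' hp'.
  exists (sw (sw x0)), (sw x0), z; split => //.
    by apply: Hc; rewrite swK !inE eqxx.
  by move: U => /= /and3P[]; rewrite !inE !negb_or => /andP[-> ->] -> _.
have [xp hxp] := vex (e_pr ht).
have ht' : touched (vu xp) by rewrite hxp.
have hp' : vv xp = pr (vu xp) by rewrite hxp.
have [z [U hz Hw [h1 h2 h3] Hc]] := compT ht' hp'.
exists (sw xp), xp, z; split => //.
  apply: Hc; have hxu : vu x0 = vu xp by rewrite hxp.
  have hs' : vv x0 != sc (vu xp) by rewrite hxp.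
  by case: (Hw x0 hxu hs') => ->; rewrite !inE eqxx ?orbT.
by move: U => /= /and3P[]; rewrite !inE !negb_or => /andP[-> ->] -> _.
Qed.

Lemma FPD : Fdir PD = D.
Proof.
apply/setP => -[u v]; rewrite FdirE; apply/existsP/idP.
  case=> x /andP[/eqP hx /andP[hsub /eqP hc]].
  case: (PD_nbr hsub) => [[_ hD]|[h1 hD]|[h1 _ _]|[h1 _ _]].
  - by rewrite -hx.
  - exfalso.
    have ht : touched (vu x) by apply/existsP; exists (vv x); apply/orP; right; exact: hD.
    have [_ Tin _] := tchP ht.
    have hp : vv x = pr (vu x) by apply/eqP; rewrite -Tin; exact: hD.
    have [z [U hz _ _ Hc]] := compT ht hp.
    move: hc; rewrite /cc (Hc x) ?card3I // ?in_Tri ?hz ?eqxx /=.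
      by rewrite eq_sym (negbTE (vuv x)).
    by rewrite !inE eqxx orbT.
  - by move: (vuv x); rewrite h1 /= eqxx.
  - by move: (vuv x); rewrite h1 /= eqxx.
move=> hD.
have [x hx] := vex (HD.1 _ _ hD).
exists x; rewrite hx eqxx /=.
have hxu : vu x = u by rewrite hx.
have hxv : vv x = v by rewrite hx.
have ht : touched u by apply/existsP; exists v; rewrite hD.
have [Tout _ _] := tchP ht.
have hv : v = sc u by apply/eqP; rewrite -Tout.
have [htw hpw] := tch_sc ht.
have ht' : touched (vu (sw x)) by rewrite /= hxv hv.
have hp' : vv (sw x) = pr (vu (sw x)) by rewrite /= hxv hv hpw.
have [z [U hz _ _ Hc]] := compT ht' hp'.
rewrite /oo PDE /R eqxx hx hD /=.
rewrite /cc (Hc x) ?card3I ?swK // ?in_Tri ?hz /= ?hxu ?hxv ?eqxx.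
  have nuv : (v == u) = false by apply/negbTE; rewrite -hxu -hxv eq_sym vuv.
  by rewrite nuv.
by rewrite !inE eqxx.
Qed.

End A2.

End Basics.

Theorem mainTheorem3 (T : finType) (e : rel T)
  (e_sym : symmetric e) (e_irr : irreflexive e)
  (B_cubic : cubic e) (B_3conn : k_connected 3 e)
  (B_no3blk : forall K : {set {set T}}, blockade e K -> #|K| <> 3) :
  (forall P : {set {set Vtri e}}, Lambda_factor (@Gadj T e) P ->
     [/\ cycle_dipacking e (Fdir P),
         (forall K : {set {set Vtri e}}, blockade (@Gadj T e) K -> #|K| = 3 ->
            (#|K :&: P| == 0) || (#|K :&: P| == 2)) &
         (forall Tr : {set Vtri e}, triangle (@Gadj T e) Tr ->
            exists2 E, E \in P & E \subset Tr)]) /\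
  (forall D : {set T * T}, cycle_dipacking e D ->
     exists P : {set {set Vtri e}}, Lambda_factor (@Gadj T e) P /\ Fdir P = D).
Proof.
split.
  move=> P HP; split.
  - exact: a1_cd e_sym e_irr B_cubic P HP.
  - exact: a1_blk e_sym e_irr B_cubic P HP.
  - exact: a1_tri e_sym e_irr B_cubic P HP.
move=> D HD; exists (PD e_sym D); split.
  exact: LPD e_sym e_irr B_cubic D HD.
exact: FPD e_sym e_irr B_cubic D HD.
Qed.
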